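(* Let $\varphi=\frac{1+\sqrt5}{2}$. For a complex number $y$ and $n\ge1$ define $$\Big(1+\frac{y}{\varphi^n}\Big)_F^n=\prod_{k=0}^{n-1}\Big(1+(-1)^k\varphi^{\,n-1-2k}\frac{y}{\varphi^n}\Big).$$ For $q=-\varphi^2$ let $[k]_q=\frac{q^k-1}{q-1}$, $[0]_q!=1$, $[k]_q!=[1]_q[2]_q\cdots[k]_q$, and $e_q(z)=\sum_{k=0}^\infty\frac{z^k}{[k]_q!}$ (Jackson $q$-exponential). Then for every $y$, $$\lim_{n\to\infty}\Big(1+\frac{y}{\varphi^n}\Big)_F^n=e_{-\varphi^2}\Big(\frac{y}{\sqrt5}\Big).$$ *)

(* Defs.v *)
From Stdlib Require Import Reals ZArith.
From Coquelicot Require Export Coquelicot.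
Open Scope R_scope.

Definition phi : R := (1 + sqrt 5) / 2.

Definition qF : R := - phi ^ 2.

Definition qint (q : R) (k : nat) : R := (q ^ k - 1) / (q - 1).

Fixpoint qfact (q : R) (k : nat) : R :=
  match k with
  | O => 1
  | S k' => qfact q k' * qint q (S k')
  end.

Definition jackson_term (q : R) (z : C) (k : nat) : C :=
  Cdiv (Cpow z k) (RtoC (qfact q k)).

Definition jackson_exp_is (q : R) (z : C) (L : C) : Prop :=
  @is_series C_AbsRing C_NormedModule (jackson_term q z) L.

Definition fib_factor (n k : nat) (y : C) : C :=
  Cplus (RtoC 1)
    (Cmult (RtoC ((-1) ^ k * powerRZ phi (Z.of_nat n - 1 - 2 * Z.of_nat k)%Z))
           (Cdiv y (RtoC (phi ^ n)))).

Fixpoint fib_prod_aux (n m : nat) (y : C) : C :=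
  match m with
  | O => RtoC 1
  | S m' => Cmult (fib_prod_aux n m' y) (fib_factor n m' y)
  end.

Definition fib_prod (n : nat) (y : C) : C := fib_prod_aux n n y.

(* Main.v *)
Require Import Defs.
From Stdlib Require Import Reals Lra Lia Psatz ClassicalEpsilon.
From Coquelicot Require Import Coquelicot.
Open Scope R_scope.

Lemma sqrt5_facts : 2 < sqrt 5 /\ sqrt 5 * sqrt 5 = 5.
Proof.
  assert (H := sqrt_sqrt 5 ltac:(lra)). assert (H0 := sqrt_pos 5).
  split; [nra|exact H].
Qed.

Lemma phi_sq : phi * phi = phi + 1.
Proof. destruct sqrt5_facts as [_ H]. unfold phi. nra. Qed.

Lemma phi_gt : 3/2 < phi.
Proof. destruct sqrt5_facts as [H _]. unfold phi. lra. Qed.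

Lemma qF_eq : qF = - (phi * phi).
Proof. unfold qF. ring. Qed.

Lemma Rabs_qpow k : Rabs (qF ^ k) = (phi*phi) ^ k.
Proof. rewrite <- RPow_abs, qF_eq, Rabs_Ropp, Rabs_right; [reflexivity|]. 
  assert (H := phi_gt). nra. Qed.

Lemma A_pow_bound k : (1 <= k)%nat -> (phi*phi)^k - 1 >= INR k * (phi*phi+1)/3.
Proof.
  assert (H := phi_gt). assert (HA : 2 < phi*phi) by nra.
  induction k as [|k IH]; intros Hk. { lia. }
  destruct k as [|k].
  - simpl. lra.
  - specialize (IH ltac:(lia)). rewrite S_INR. simpl pow in *.
    set (X := (phi * phi) * (phi * phi) ^ k) in *.
    assert (0 <= INR (S k)) by apply pos_INR.
    set (A := phi * phi) in *. set (s := INR (S k)) in *.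
    assert (0 <= (A - 1) * (X - 1 - s * (A+1)/3)) by (apply Rmult_le_pos; lra).
    assert (0 <= (A - 1) * (s * (A+1))) by (apply Rmult_le_pos; [lra| apply Rmult_le_pos; lra]).
    nra.
Qed.

Lemma qint_bound k : (1 <= k)%nat -> Rabs (qint qF k) >= INR k / 3.
Proof.
  intros Hk. assert (H := phi_gt). assert (HA : 2 < phi*phi) by nra.
  unfold qint. rewrite Rabs_div.
  2:{ rewrite qF_eq. lra. }
  assert (E1 : Rabs (qF - 1) = phi*phi + 1).
  { rewrite qF_eq. rewrite Rabs_left; lra. }
  rewrite E1.
  assert (T := Rabs_triang_inv (qF ^ k) 1). rewrite Rabs_qpow, Rabs_R1 in T.
  assert (B := A_pow_bound k Hk).
  apply Rle_ge. apply Rmult_le_reg_r with (phi*phi+1); [lra|].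
  unfold Rdiv. rewrite (Rmult_assoc (Rabs _)), Rinv_l by lra. rewrite Rmult_1_r. lra.
Qed.

Lemma qfact_bound k : Rabs (qfact qF k) >= INR (Factorial.fact k) / 3 ^ k.
Proof.
  induction k as [|k IH].
  - simpl. rewrite Rabs_R1. lra.
  - simpl qfact. rewrite Rabs_mult.
    assert (B := qint_bound (S k) ltac:(lia)).
    rewrite fact_simpl, mult_INR.
    assert (0 < INR (Factorial.fact k)) by apply INR_fact_lt_0.
    assert (0 < INR (S k)) by (apply lt_0_INR; lia).
    assert (0 < 3 ^ k) by (apply pow_lt; lra).
    simpl pow.
    apply Rle_ge.
    apply Rle_trans with ((INR (Factorial.fact k) / 3 ^ k) * (INR (S k) / 3)).
    + right. field. lra.
    + apply Rmult_le_compat; try lra.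
      * apply Rmult_le_pos; [lra|]. apply Rlt_le, Rinv_0_lt_compat; lra.
Qed.

Lemma qfact_pos k : 0 < Rabs (qfact qF k).
Proof.
  assert (H := qfact_bound k).
  assert (0 < INR (Factorial.fact k)) by apply INR_fact_lt_0.
  assert (0 < 3 ^ k) by (apply pow_lt; lra).
  assert (0 < INR (Factorial.fact k) / 3 ^ k) by (apply Rdiv_lt_0_compat; lra). lra.
Qed.

Lemma qfact_neq0 k : qfact qF k <> 0.
Proof. intro E. assert (H := qfact_pos k). rewrite E, Rabs_R0 in H. lra. Qed.

Lemma norm_series_le (a : nat -> C) (b : nat -> R) La Lb :
  is_series a La -> is_series b Lb -> (forall n, Cmod (a n) <= b n) -> Cmod La <= Lb.
Proof.
  intros Ha Hb Hab.
  assert (H : Rbar_le (Cmod La) Lb).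
  { apply (is_lim_seq_le (fun N => Cmod (sum_n a N)) (sum_n b)).
    - intros N. unfold sum_n. eapply Rle_trans. apply (norm_sum_n_m a 0 N).
      apply sum_n_m_le. intros k. apply Hab.
    - unfold is_lim_seq. simpl.
      apply (filterlim_comp _ _ _ (sum_n a) (@norm _ C_NormedModule) eventually (locally La)).
      exact Ha. apply (filterlim_norm (V:=C_NormedModule) La).
    - exact Hb. }
  exact H.
Qed.

Lemma RtoC_neq0 x : x <> 0 -> RtoC x <> 0%C.
Proof. intros H E. apply H. injection E. auto. Qed.

Lemma t_norm w k : Cmod (jackson_term qF w k) = Cmod w ^ k / Rabs (qfact qF k).
Proof.
  unfold jackson_term. rewrite Cmod_div by (apply RtoC_neq0, qfact_neq0).
  rewrite Cmod_pow, Cmod_R. reflexivity.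
Qed.

Lemma t_bound w k : Cmod (jackson_term qF w k) <= / INR (Factorial.fact k) * (3 * Cmod w) ^ k.
Proof.
  rewrite t_norm. assert (B := qfact_bound k). assert (P := qfact_pos k).
  assert (0 < INR (Factorial.fact k)) by apply INR_fact_lt_0.
  assert (0 < 3 ^ k) by (apply pow_lt; lra).
  assert (0 <= Cmod w ^ k) by (apply pow_le, Cmod_ge_0).
  rewrite Rpow_mult_distr.
  unfold Rdiv. 
  apply Rle_trans with (Cmod w ^ k * / (INR (Factorial.fact k) / 3 ^ k)).
  - apply Rmult_le_compat_l; auto. apply Rinv_le_contravar.
    apply Rdiv_lt_0_compat; lra. lra.
  - right. field. lra.
Qed.

Lemma exp_series x : exists l, is_series (fun k => / INR (Factorial.fact k) * x ^ k) l.
Proof.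
  destruct (exist_exp x) as [l Hl]. exists l. apply is_series_Reals. exact Hl.
Qed.

Lemma t_conv w : exists L, is_series (jackson_term qF w) L.
Proof.
  destruct (exp_series (3 * Cmod w)) as [l Hl].
  assert (H : ex_series (jackson_term qF w)).
  { apply (ex_series_le (V := C_CompleteNormedModule) _ (fun k => / INR (Factorial.fact k) * (3 * Cmod w) ^ k)).
    - intros n. apply t_bound.
    - exists l. exact Hl. }
  exact H.
Qed.

Definition E (w : C) : C := proj1_sig (constructive_indefinite_description _ (t_conv w)).
Lemma E_spec w : is_series (jackson_term qF w) (E w).
Proof. unfold E. destruct constructive_indefinite_description. simpl. auto. Qed.

Lemma qF_m1 : qF - 1 <> 0.
Proof. assert (H := phi_gt). rewrite qF_eq. nra. Qed.

Lemma term_id x k :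
  jackson_term qF (RtoC qF * x) (S k) =
  (jackson_term qF x (S k) + (RtoC (qF - 1) * x) * jackson_term qF x k)%C.
Proof.
  unfold jackson_term. simpl qfact.
  assert (Hq : qint qF (S k) <> 0).
  { intro E0. assert (B := qint_bound (S k) ltac:(lia)). rewrite E0, Rabs_R0 in B.
    assert (0 < INR (S k)) by (apply lt_0_INR; lia). lra. }
  assert (Hf := qfact_neq0 k).
  assert (Hqs : qF ^ (S k) - 1 <> 0).
  { intro E0. apply Hq. unfold qint. rewrite E0. unfold Rdiv. ring. }
  unfold qint in *.
  rewrite RtoC_mult, RtoC_div by exact qF_m1.
  rewrite !RtoC_minus, RtoC_pow. 
  rewrite Cpow_mult_l. rewrite !Cpow_S.
  assert (H1 : RtoC (qfact qF k) <> 0%C) by (apply RtoC_neq0; auto).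
  assert (H2 : (RtoC qF - RtoC 1)%C <> 0%C) by (rewrite <- RtoC_minus; apply RtoC_neq0, qF_m1).
  assert (H3 : (RtoC qF * Cpow (RtoC qF) k - RtoC 1)%C <> 0%C).
  { rewrite <- RtoC_pow, <- RtoC_mult, <- RtoC_minus. apply RtoC_neq0. exact Hqs. }
  field. repeat split; auto.
Qed.

Lemma series_shift (w : C) : is_series (fun k => jackson_term qF w (S k)) (E w - 1)%C.
Proof.
  apply is_series_incr_1.
  assert (H0 : jackson_term qF w 0 = 1%C).
  { unfold jackson_term. simpl. field. }
  rewrite H0. match goal with |- is_series _ ?l => replace l with (E w) by (change plus with Cplus; simpl; ring) end.
  apply E_spec.
Qed.

Lemma E_fe x : E (RtoC qF * x)%C = ((1 + RtoC (qF - 1) * x) * E x)%C.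
Proof.
  assert (H1 := series_shift (RtoC qF * x)%C).
  assert (H2 := series_shift x).
  assert (H3 := is_series_scal (V := C_NormedModule) (RtoC (qF - 1) * x)%C _ _ (E_spec x)).
  assert (H4 := is_series_plus _ _ _ _ H2 H3).
  assert (H5 : is_series (fun k => jackson_term qF (RtoC qF * x)%C (S k))
                  (plus (E x - 1)%C (scal (RtoC (qF - 1) * x)%C (E x)))).
  { eapply is_series_ext; [|exact H4]. intros n. simpl. rewrite term_id. reflexivity. }
  assert (U := filterlim_locally_unique _ _ _ H1 H5).
  change plus with Cplus in U. change scal with Cmult in U. simpl in U.
  assert (U' : E (RtoC qF * x)%C = ((E (RtoC qF * x)%C - 1) + 1)%C) by ring.
  rewrite U', U. ring.
Qed.

Lemma E_near0 : exists K, forall w, Cmod w <= 1 -> Cmod (E w - 1)%C <= Cmod w * K.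
Proof.
  destruct (exp_series 3) as [l Hl].
  exists (3 * l).
  intros w Hw.
  apply (norm_series_le (fun k => jackson_term qF w (S k)) (fun k => Cmod w * 3 * (/ INR (Factorial.fact k) * 3 ^ k))).
  - apply series_shift.
  - replace (Cmod w * (3 * l)) with (Cmod w * 3 * l) by ring.
    apply (is_series_scal_l (V := R_NormedModule) (Cmod w * 3)). exact Hl.
  - intros k. eapply Rle_trans. apply t_bound.
    assert (F1 : INR (Factorial.fact k) <= INR (Factorial.fact (S k))).
    { apply le_INR. rewrite fact_simpl. lia. }
    assert (F0 := INR_fact_lt_0 k).
    assert (Hc := Cmod_ge_0 w).
    assert (P0 : 0 <= Cmod w ^ k) by (apply pow_le; lra).
    assert (P1 : Cmod w ^ k <= 1) by (rewrite <- (pow1 k); apply pow_incr; lra).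
    rewrite Rpow_mult_distr. simpl pow.
    assert (P3 : 0 < 3 ^ k) by (apply pow_lt; lra).
    assert (I1 : / INR (Factorial.fact (S k)) <= / INR (Factorial.fact k)).
    { apply Rinv_le_contravar; lra. }
    assert (I2 : 0 < / INR (Factorial.fact (S k))) by (apply Rinv_0_lt_compat; lra).
    set (a := / INR (Factorial.fact (S k))) in *. set (b := / INR (Factorial.fact k)) in *.
    set (c := Cmod w) in *. set (t := 3 ^ k) in *. set (u := c ^ k) in *.
    assert (0 <= c * t) by (apply Rmult_le_pos; lra).
    assert (c * t * u <= c * t) by (rewrite <- (Rmult_1_r (c*t)) at 2; apply Rmult_le_compat_l; lra).
    assert (0 <= c * t * u) by (apply Rmult_le_pos; lra).
    assert (a * (c*t*u) <= b * (c*t)).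
    { apply Rmult_le_compat; lra. }
    nra.
Qed.

Lemma alpha_eq n k :
  (-1) ^ k * powerRZ phi (Z.of_nat n - 1 - 2 * Z.of_nat k)%Z =
  (qF - 1) * (/ qF) ^ (S k) * phi ^ n / sqrt 5.
Proof.
  assert (Hp := phi_gt). assert (Hpp := phi_sq). destruct sqrt5_facts as [S1 S2].
  assert (Hphi0 : phi <> 0) by lra.
  set (Z0 := powerRZ phi (Z.of_nat n - 1 - 2 * Z.of_nat k)%Z).
  assert (HZ : Z0 * (phi ^ k * phi ^ k * phi) = phi ^ n).
  { replace (phi ^ k * phi ^ k * phi) with (phi ^ (k + k + 1)) by (rewrite !pow_add; ring).
    rewrite !pow_powerRZ. unfold Z0.
    rewrite <- powerRZ_add by exact Hphi0. f_equal. lia. }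
  rewrite pow_inv.
  assert (Hq : qF ^ S k = - ((-1) ^ k) * (phi * phi * (phi ^ k * phi ^ k))).
  { rewrite qF_eq. replace (- (phi*phi)) with ((-1) * (phi*phi)) by ring.
    rewrite Rpow_mult_distr. simpl pow. rewrite Rpow_mult_distr. ring. }
  assert (Hs : (-1) ^ k * (-1) ^ k = 1).
  { rewrite <- Rpow_mult_distr. replace (-1 * -1) with 1 by ring. apply pow1. }
  rewrite Hq, <- HZ, qF_eq.
  assert (0 < phi ^ k) by (apply pow_lt; lra).
  set (s := (-1) ^ k) in *. set (X := phi ^ k) in *.
  assert (s <> 0) by (intro E0; rewrite E0 in Hs; lra).
  field_simplify; [| repeat split; try lra; nra ..].
  assert (Hk : phi ^ 2 + 1 = phi * sqrt 5) by (unfold phi; nra).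
  assert (Hd : - s * phi * sqrt 5 <> 0).
  { intro E0. assert (s * (- s * phi * sqrt 5) = 0) by (rewrite E0; ring). nra. }
  apply (Rmult_eq_reg_r (- s * phi * sqrt 5)); [|exact Hd].
  match goal with |- _ = ?b / ?c * ?c => replace (b / c * c) with b by (field; repeat split; lra) end.
  replace (- Z0 * phi ^ 2 - Z0) with (- Z0 * (phi ^ 2 + 1)) by ring. rewrite Hk.
  replace (s * Z0 * (- s * phi * sqrt 5)) with (- (s * s) * Z0 * phi * sqrt 5) by ring.
  rewrite Hs. ring.
Qed.

Lemma qF_neq0 : qF <> 0.
Proof. assert (H := phi_gt). rewrite qF_eq. nra. Qed.

Lemma factor_eq n k y :
  fib_factor n k y = (1 + RtoC (qF - 1) * (RtoC ((/ qF) ^ (S k)) * (y / RtoC (sqrt 5))))%C.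
Proof.
  unfold fib_factor. rewrite alpha_eq.
  destruct sqrt5_facts as [S1 _]. assert (Hp := phi_gt).
  assert (H1 : RtoC (sqrt 5) <> 0%C) by (apply RtoC_neq0; lra).
  assert (H2 : RtoC (phi ^ n) <> 0%C) by (apply RtoC_neq0, pow_nonzero; lra).
  rewrite RtoC_div by lra. rewrite !RtoC_mult.
  field. split; auto.
Qed.

Lemma iterate n y m :
  E (y / RtoC (sqrt 5))%C =
  (fib_prod_aux n m y * E (RtoC ((/ qF) ^ m) * (y / RtoC (sqrt 5))))%C.
Proof.
  induction m as [|m IH].
  - simpl. replace (RtoC 1 * (y / RtoC (sqrt 5)))%C with (y / RtoC (sqrt 5))%C by ring. ring.
  - rewrite IH. simpl fib_prod_aux.
    replace (RtoC ((/ qF) ^ m) * (y / RtoC (sqrt 5)))%C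
      with (RtoC qF * (RtoC ((/ qF) ^ S m) * (y / RtoC (sqrt 5))))%C.
    2:{ rewrite Cmult_assoc, <- RtoC_mult. f_equal. f_equal. simpl pow. field. exact qF_neq0. }
    rewrite E_fe, factor_eq. ring.
Qed.

Theorem mainTheorem13 : forall y : C,
  exists L : C,
    jackson_exp_is qF (Cdiv y (RtoC (sqrt 5))) L /\
    filterlim (fun n : nat => fib_prod n y) eventually (locally L).
Proof.
  intros y. set (w0 := Cdiv y (RtoC (sqrt 5))).
  exists (E w0). split; [apply E_spec|].
  destruct E_near0 as [K HK].
  apply (proj2 (filterlim_locally_ball_norm (K:=C_AbsRing) (U:=C_NormedModule) (fun n : nat => fib_prod n y) (E w0))). intros eps.
  set (cL := Cmod (E w0)).
  assert (HcL : 0 <= cL) by apply Cmod_ge_0.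
  assert (Heps := cond_pos eps).
  set (δ := Rmin (1/2) (eps / (2*cL+1))).
  assert (Hδ1 : δ <= 1/2) by apply Rmin_l.
  assert (Hδ2 : δ <= eps / (2*cL+1)) by apply Rmin_r.
  assert (Hδ0 : 0 < δ).
  { apply Rmin_pos; [lra|]. apply Rdiv_lt_0_compat; lra. }
  assert (Hc0 := Cmod_ge_0 w0).
  assert (HKa : K <= Rabs K + 1) by (assert (H := Rle_abs K); lra).
  assert (HKp : 0 < Rabs K + 1) by (assert (H := Rabs_pos K); lra).
  set (η := δ / ((Cmod w0 + 1) * (Rabs K + 1))).
  assert (Hη : 0 < η) by (apply Rdiv_lt_0_compat; [lra| apply Rmult_lt_0_compat; lra]).
  assert (Hr : Rabs (/ qF) < 1).
  { rewrite Rabs_inv, qF_eq, Rabs_Ropp. assert (H := phi_gt).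
    rewrite Rabs_right by nra. rewrite <- Rinv_1. apply Rinv_lt_contravar; nra. }
  destruct (pow_lt_1_zero (/ qF) Hr η Hη) as [N HN].
  exists N. intros n Hn.
  specialize (HN n Hn).
  set (ρ := Rabs ((/ qF) ^ n)) in *.
  assert (Hρ0 : 0 <= ρ) by apply Rabs_pos.
  set (wn := (RtoC ((/ qF) ^ n) * w0)%C).
  assert (Hwn : Cmod wn = ρ * Cmod w0) by (unfold wn; rewrite Cmod_mult, Cmod_R; reflexivity).
  assert (Hdel : ρ * (Cmod w0 + 1) * (Rabs K + 1) < δ).
  { unfold η in HN. 
    assert (0 < (Cmod w0 + 1) * (Rabs K + 1)) by (apply Rmult_lt_0_compat; lra).
    apply Rmult_lt_compat_r with (r := (Cmod w0 + 1) * (Rabs K + 1)) in HN; [|lra].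
    unfold Rdiv in HN. rewrite Rmult_assoc, Rinv_l in HN by lra. lra. }
  assert (Hwn1 : Cmod wn <= 1).
  { rewrite Hwn. assert (ρ * Cmod w0 <= ρ * (Cmod w0 + 1) * (Rabs K + 1)).
    { assert (0 <= ρ * (Cmod w0 + 1) * Rabs K) by
        (apply Rmult_le_pos; [apply Rmult_le_pos|apply Rabs_pos]; lra). nra. }
    lra. }
  set (D := E wn).
  set (d := Cmod (D - 1)%C).
  assert (Hd : d < δ).
  { assert (H := HK wn Hwn1). fold D in H. fold d in H.
    assert (Cmod wn * K <= Cmod wn * (Rabs K + 1)) by (apply Rmult_le_compat_l; [apply Cmod_ge_0|lra]).
    rewrite Hwn in *.
    assert (ρ * Cmod w0 * (Rabs K + 1) <= ρ * (Cmod w0 + 1) * (Rabs K + 1)) by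
      (apply Rmult_le_compat_r; [lra|]; apply Rmult_le_compat_l; lra).
    lra. }
  assert (Hd0 : 0 <= d) by apply Cmod_ge_0.
  assert (HL := iterate n y n). fold w0 in HL. fold wn in HL. fold D in HL.
  change (fib_prod_aux n n y) with (fib_prod n y) in HL.
  set (P := fib_prod n y) in *.
  unfold ball_norm. change (Cmod (P - E w0)%C < eps).
  assert (E1 : (P - E w0)%C = (- (P * (D - 1)))%C) by (rewrite HL; ring).
  rewrite E1, Cmod_opp, Cmod_mult. fold d.
  assert (HcP : 0 <= Cmod P) by apply Cmod_ge_0.
  assert (HD : 1 - d <= Cmod D).
  { assert (T := Cmod_triangle D (- (D - 1))%C).
    replace (D + - (D - 1))%C with (RtoC 1) in T by ring.
    rewrite Cmod_1, Cmod_opp in T. fold d in T. lra. }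
  assert (HLm : cL = Cmod P * Cmod D) by (unfold cL; rewrite HL, Cmod_mult; reflexivity).
  assert (HP2 : Cmod P <= 2 * cL).
  { assert (Cmod P * (1 - d) <= Cmod P * Cmod D) by (apply Rmult_le_compat_l; lra). nra. }
  assert (Hfin : (2*cL+1) * d < eps).
  { assert (Hx : (2*cL+1) * d < (2*cL+1) * (eps / (2*cL+1))) by (apply Rmult_lt_compat_l; lra).
    replace ((2*cL+1) * (eps / (2*cL+1))) with (pos eps) in Hx by (field; lra). exact Hx. }
  assert (Cmod P * d <= 2 * cL * d) by (apply Rmult_le_compat_r; lra).
  nra.
Qed.
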